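(* Let $i\ge1$, let $u$ be any word of length $n$ of type $(m_1,\dots,m_{i-1})$, and let $m_i$ be a positive integer with $c:=m_1+\dots+m_i\le n$. Then the sum, over all queues $q$ of capacity $c$ (i.e. over all $c$-element subsets of terminal sites), of the weight of $q$ with respect to $u$ equals \[ h_{n-c}(\underbrace{t_1,\dots,t_1}_{m_1},\underbrace{t_2,\dots,t_2}_{m_2},\dots,\underbrace{t_{i-1},\dots,t_{i-1}}_{m_{i-1}},\underbrace{t_i,\dots,t_i}_{m_i+1}), \] where $h_k$ denotes the complete homogeneous symmetric polynomial of degree $k$.
   Context: Fix a positive integer $n$; sites $1,\dots,n$ are arranged cyclically. A word is $w=w_1\cdots w_n\in\{1,2,\dots,\infty\}^n$; finite entries are particles (of size equal to the entry), entries $\infty$ are empty sites. A word has type $(m_1,\dots,m_{i-1})$ (positive integers) if it has exactly $m_j$ entries equal to $j$ for $1\le j\le i-1$ and all other entries $\infty$. Queues: a queue of capacity $c$ is a choice of $c$ of the $n$ sites, called terminal. Given the input word $u$ (finite entries in $\{1,\dots,i-1\}$), replace each $\infty$ by $i$; then the $n$ particles enter the queue one at a time in an order in which smaller particles come before larger ones (ties arbitrary). A particle at site $j$ first visits site $j$, then $j+1,j+2,\dots$ cyclically, stopping at (and occupying) the first terminal site not yet occupied; if all terminal sites are occupied it visits every site and is discarded. For each size $s\in\{1,\dots,i\}$ let $\alpha_s$ be the number of non-terminal sites whose first visitor has size $s$; the weight of $q$ with respect to $u$ is $\prod_{s=1}^{i} t_s^{\alpha_s}$ (independent of tie-breaking).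 *)

(* Defs.v *)
From mathcomp Require Import all_boot all_order all_algebra.
Set Implicit Arguments. Unset Strict Implicit. Unset Printing Implicit Defensive.
Import GRing.Theory.

(* Sites are 'I_n, arranged cyclically.  A word is a function
   'I_n -> option nat, with None standing for the entry oo (empty site). *)

Definition site n (j : 'I_n) (k : nat) : 'I_n := iter k (@ordS n) j.

(* State of the queue: set of occupied terminal sites, and for each site the
   size of its first visitor (None if not yet visited). *)
Definition qstate n := ({set 'I_n} * {ffun 'I_n -> option nat})%type.

(* One particle of size s starting at site j enters the queue q. *)
Definition qstep n (q : {set 'I_n}) (st : qstate n) (ps : 'I_n * nat)
  : qstate n :=
  let: (occ, fv) := st in
  let: (j, s) := ps in
  let stop k := (site j k \in q) && (site j k \notin occ) in
  (* index of the stopping site along the path, or n if discarded *)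
  let d := find stop (iota 0 n) in
  let visited x := has (fun k => (k <= d) && (site j k == x)) (iota 0 n) in
  let occ' := if d < n then site j d |: occ else occ in
  (occ', [ffun x => if fv x is Some s' then Some s'
                    else if visited x then Some s else None]).

Definition psize n (i : nat) (u : 'I_n -> option nat) (x : 'I_n) : nat :=
  odflt i (u x).

(* Order of entry: smaller particles first; ties broken by site index
   (the weight is independent of the tie-breaking). *)
Definition entry_order n (i : nat) (u : 'I_n -> option nat) : seq ('I_n * nat) :=
  flatten [seq [seq (x, s) | x <- enum 'I_n & psize i u x == s] | s <- iota 1 i].

Definition qfinal n (i : nat) (u : 'I_n -> option nat) (q : {set 'I_n}) : qstate n :=
  foldl (qstep q) (set0, [ffun => None]) (entry_order i u).

Definition alpha n (i : nat) (u : 'I_n -> option nat) (q : {set 'I_n}) (s : nat) : nat :=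
  #|[set x | (x \notin q) && ((qfinal i u q).2 x == Some s)]|.

Definition qweight (R : comNzRingType) (t : nat -> R) n (i : nat)
  (u : 'I_n -> option nat) (q : {set 'I_n}) : R :=
  (\prod_(1 <= s < i.+1) t s ^+ alpha i u q s)%R.

Definition has_type n (i : nat) (m : nat -> nat) (u : 'I_n -> option nat) : Prop :=
  (forall j, 1 <= j < i -> 0 < m j) /\
  (forall j, 1 <= j < i -> #|[set x | u x == Some j]| = m j) /\
  (forall x, match u x with None => true | Some j => 1 <= j < i end : Prop).

Definition hsym (R : comNzRingType) (k : nat) (xs : seq R) : R :=
  (\sum_(e : {ffun 'I_(size xs) -> 'I_k.+1} | \sum_(j < size xs) (e j : nat) == k)
     \prod_(j < size xs) xs`_j ^+ e j)%R.

(* Main.v *)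
Require Import Defs.
From mathcomp Require Import all_boot all_order all_algebra.
From mathcomp Require Import zify.
Import GRing.Theory.
Lemma site_val n (j : 'I_n) k : val (site j k) = (j + k) %% n.
Proof.
elim: k => [|k IH] /=; first by rewrite addn0 modn_small.
rewrite /site /= -/(site j k) IH.
by rewrite -(addn1 ((j+k) %% n)) modnDml addnS addn0 addnS.
Qed.

Lemma site_inj n (j : 'I_n) k1 k2 : k1 < n -> k2 < n -> site j k1 = site j k2 -> k1 = k2.
Proof.
move=> h1 h2 /(congr1 val); rewrite !site_val => /eqP.
by rewrite eqn_modDl !modn_small // => /eqP.
Qed.

Lemma site_surj n (j : 'I_n) (x : 'I_n) : exists2 k, k < n & site j k = x.
Proof.
have n0 : 0 < n by apply: (leq_ltn_trans _ (ltn_ord x)).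
exists ((x + (n - j)) %% n); first by rewrite ltn_mod.
apply: val_inj; rewrite site_val /= modnDmr addnCA subnKC; last exact: ltnW.
by rewrite modnDr modn_small.
Qed.

Definition vis {n} (fv : {ffun 'I_n -> option nat}) : {set 'I_n} := [set x | fv x != None].
Definition visd {n} (j : 'I_n) d (x : 'I_n) : bool :=
  has (fun k => (k <= d) && (site j k == x)) (iota 0 n).
Definition fvd {n} (j : 'I_n) (s d : nat) (fv : {ffun 'I_n -> option nat}) : {ffun 'I_n -> option nat} :=
  [ffun x => if fv x is Some s' then Some s' else if visd j d x then Some s else None].
Definition dq {n} (q occ : {set 'I_n}) (j : 'I_n) :=
  find (fun k => (site j k \in q) && (site j k \notin occ)) (iota 0 n).
Definition idx {n} (st : qstate n) r (q : {set 'I_n}) : bool :=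
  (q :&: vis st.2 == st.1) && (#|q :\: vis st.2| == r).

Lemma qstepE n (q occ : {set 'I_n}) fv (j : 'I_n) s :
  qstep q (occ, fv) (j, s) =
  (if dq q occ j < n then site j (dq q occ j) |: occ else occ, fvd j s (dq q occ j) fv).
Proof. by []. Qed.

Lemma visdP n (j : 'I_n) d x :
  reflect (exists2 k : 'I_n, k <= d & site j k = x) (visd j d x).
Proof.
apply: (iffP hasP) => [[k]|[k hk <-]].
  by rewrite mem_iota add0n => /andP [_ hkn] /andP [hkd /eqP <-]; exists (Ordinal hkn).
by exists (val k); rewrite ?mem_iota ?ltn_ord ?hk ?eqxx.
Qed.

Lemma visfvd n (j : 'I_n) s d fv x :
  (x \in vis (fvd j s d fv)) = (x \in vis fv) || visd j d x.
Proof. by rewrite !inE ffunE; case: (fv x) => //=; case: visd. Qed.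

Lemma find_iota_spec (p : pred nat) n d :
  find p (iota 0 n) = d -> d < n -> p d /\ (forall l, l < d -> ~~ p l).
Proof.
move=> hd hdn.
have hh : has p (iota 0 n) by rewrite has_find size_iota hd.
split; first by have := nth_find 0 hh; rewrite hd nth_iota.
move=> l hl; have hl' : l < find p (iota 0 n) by rewrite hd.
by have := before_find 0 hl'; rewrite nth_iota ?(ltn_trans hl) // add0n => ->.
Qed.

Lemma find_iota_eq (p : pred nat) n d :
  d < n -> p d -> (forall l, l < d -> ~~ p l) -> find p (iota 0 n) = d.
Proof.
move=> hdn hp hb.
have hh : has p (iota 0 n) by apply/hasP; exists d; rewrite ?mem_iota.
have hlt : find p (iota 0 n) < n by rewrite -[n in _ < n](size_iota 0) -has_find.
case: (ltngtP (find p (iota 0 n)) d) => // h.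
  by have := nth_find 0 hh; rewrite nth_iota // add0n => hp'; move: (hb _ h); rewrite hp'.
by have := before_find 0 h; rewrite nth_iota ?add0n ?hp.
Qed.

Lemma setD_step n (q V Vd : {set 'I_n}) x0 :
  x0 \in q -> x0 \notin V -> x0 \in Vd -> {subset V <= Vd} ->
  (forall x, x \in q -> x \notin V -> x \in Vd -> x = x0) ->
  #|q :\: V| = (#|q :\: Vd|).+1.
Proof.
move=> x0q x0V x0Vd sVVd hx.
have -> : q :\: V = x0 |: (q :\: Vd).
  apply/setP => x; rewrite !inE.
  have [->|xx0] := eqVneq x x0; first by rewrite x0q x0V.
  move: (sVVd x) (hx x) xx0; case: (x \in q); case: (x \in V); case: (x \in Vd) => //= h1 h2;
    first [by have := h1 isT | by rewrite h2 ?eqxx].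
by rewrite cardsU1 !inE x0Vd.
Qed.

Lemma idx_step n (q occ : {set 'I_n}) fv (j : 'I_n) s r (k : 'I_n) :
  occ \subset vis fv ->
  (idx (occ, fv) r.+1 q && (dq q occ j == k)) =
  (site j k \notin vis fv) && idx (site j k |: occ, fvd j s k fv) r q.
Proof.
move=> /subsetP hocc; rewrite /idx /=.
set V := vis fv; set x0 := site j k.
have x0Vd : x0 \in vis (fvd j s k fv) by rewrite visfvd; apply/orP; right; apply/visdP; exists k.
have x0vis : visd j k x0 by apply/visdP; exists k.
have sVVd : {subset V <= vis (fvd j s k fv)} by move=> x xV; rewrite visfvd xV.
apply/idP/idP.
  case/andP => /andP [/eqP hI /eqP hC] /eqP hd.
  have [/andP [x0q x0occ] hbefore] := @find_iota_spec _ n k hd (ltn_ord k).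
  have hIx x : (x \in q) && (x \in V) = (x \in occ) by rewrite -hI !inE andbC.
  have x0V : x0 \notin V by apply/negP => x0V; move: (hIx x0); rewrite x0q x0V (negbTE x0occ).
  have key x : x \in q -> x \notin V -> visd j k x -> x = x0.
    move=> xq xV /visdP [l hl hlx]; move: hl; rewrite leq_eqVlt => /orP [/eqP hlk|hlk].
      by rewrite -hlx /x0 hlk.
    move: (hbefore _ hlk); rewrite hlx xq /= negbK => /hocc; by rewrite (negbTE xV).
  rewrite x0V /=; apply/andP; split.
    apply/eqP/setP => x; rewrite in_setI in_setU1 visfvd.
    have [->|xx0] := eqVneq x x0; first by rewrite x0q x0vis orbT.
    rewrite /= -hIx; case xq: (x \in q) => //=.
    case xV: (x \in V) => //=; apply/negP => hv.
    by move: xx0; rewrite (key x) ?xV ?eqxx.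
  apply/eqP; apply/eq_add_S; rewrite -hC; apply/esym/(@setD_step _ _ _ _ x0) => //.
  by move=> x xq xV; rewrite visfvd (negbTE xV) /=; apply: key.
case/andP => x0V /andP [/eqP hI /eqP hC].
have hIx x : (x \in q) && ((x \in V) || visd j k x) = (x == x0) || (x \in occ)
  by rewrite -(visfvd _ j s k) -in_setI hI in_setU1.
have x0q : x0 \in q by have := hIx x0; rewrite eqxx /= => /andP [].
have key x : x \in q -> x \notin V -> visd j k x -> x = x0.
  move=> xq xV hv; move: (hIx x); rewrite xq hv orbT => /esym /orP [/eqP //|/hocc].
  by rewrite (negbTE xV).
apply/andP; split; first (apply/andP; split).
- apply/eqP/setP => x; rewrite in_setI.
  case xo: (x \in occ); first by rewrite (hocc _ xo) andbT; move: (hIx x); rewrite xo orbT => /andP [].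
  case xq: (x \in q) => //=; apply/negP => xV.
  by move: (hIx x); rewrite xq xV xo /= orbF => /esym /eqP hx; move: x0V; rewrite -hx xV.
- rewrite (@setD_step _ _ _ (vis (fvd j s k fv)) x0) ?hC //.
  by move=> x xq xV; rewrite visfvd (negbTE xV) /=; apply: key.
apply/eqP/find_iota_eq => //.
  by rewrite x0q; apply/negP => /hocc; rewrite (negbTE x0V).
move=> l hl; apply/negP => /andP [lq lo].
have hln : l < n by apply: (ltn_trans hl).
move: (hIx (site j l)); rewrite lq (negbTE lo) orbF.
have -> : visd j k (site j l) by apply/visdP; exists (Ordinal hln) => //; exact: ltnW.
rewrite orbT /= => /esym /eqP /site_inj => /(_ hln (ltn_ord k)) hlk.
by move: hl; rewrite hlk ltnn.
Qed.

Lemma idx0 n (occ : {set 'I_n}) fv q : occ \subset vis fv ->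
  idx (occ, fv) 0 q = (q == occ).
Proof.
move=> hocc; rewrite /idx /= cards_eq0 setD_eq0.
apply/idP/eqP => [/andP [/eqP hI hsub]|->].
  by rewrite -hI; apply/esym/setIidPl.
by rewrite hocc andbT; apply/eqP/setIidPl.
Qed.

Lemma dq_lt n (q occ : {set 'I_n}) fv (j : 'I_n) r :
  idx (occ, fv) r.+1 q -> dq q occ j < n.
Proof.
rewrite /idx /= => /andP [/eqP hI /eqP hC].
have : 0 < #|q :\: vis fv| by rewrite hC.
case/card_gt0P => x; rewrite inE => /andP [xV xq].
have [k hk hkx] := site_surj _ j x.
rewrite /dq -[n in _ < n](size_iota 0) -has_find; apply/hasP; exists k; first by rewrite mem_iota.
rewrite hkx xq /=; apply/negP; rewrite -hI in_setI => /andP [_ xV'].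
by rewrite xV' in xV.
Qed.

Lemma card_visd n (j : 'I_n) (V : {set 'I_n}) (k : nat) : k < n ->
  #|[set x | (x \notin V) && visd j k x]| = \sum_(0 <= l < k.+1) (site j l \notin V).
Proof.
move=> hkn.
have -> : [set x | (x \notin V) && visd j k x] =
          (fun l : 'I_n => site j l) @: [set l : 'I_n | (l <= k) && (site j l \notin V)].
  apply/setP => x; rewrite inE; apply/andP/imsetP => [[xV /visdP [l hl hlx]]|[l]].
    by exists l; rewrite ?inE ?hl ?hlx.
  by rewrite inE => /andP [hl hlV] ->; split => //; apply/visdP; exists l.
rewrite card_imset; last by move=> a b /site_inj h; apply: val_inj; apply: h.
rewrite -sum1_card big_mkcond /=.
rewrite (eq_bigr (fun i : 'I_n => if (i <= k) && (site j i \notin V) then 1 else 0)); last by move=> i _; rewrite inE.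
rewrite -(big_mkord xpredT (fun l => if (l <= k) && (site j l \notin V) then 1 else 0)).
rewrite (@big_cat_nat _ _ _ k.+1 0 n) //= [X in _ + X]big_nat_cond [X in _ + X]big1 ?addn0; last first.
  by move=> l /andP [/andP [hl _] _]; rewrite leqNgt hl.
rewrite big_nat_cond [RHS]big_nat_cond; apply: eq_bigr => l /andP [/andP [_ hl] _].
by rewrite ltnS in hl; rewrite hl /=; case: (site j l \notin V).
Qed.

Lemma count_sum (R : comNzRingType) (b : nat -> bool) (F : nat -> R) n :
  (\sum_(0 <= k < n | b k) F (\sum_(0 <= l < k.+1) (b l : nat))%N)%R =
  (\sum_(0 <= a < (\sum_(0 <= l < n) (b l : nat))%N) F a.+1)%R.
Proof.
elim: n => [|n IH]; first by rewrite !big_geq.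
rewrite big_mkcond big_nat_recr //= -big_mkcond IH.
rewrite [in RHS](big_nat_recr n) //=.
case hb: (b n) => /=; last by rewrite addr0 addn0.
by rewrite (big_nat_recr n 0 (fun l => nat_of_bool (b l))) //= hb addn1 big_nat_recr.
Qed.

Definition Wt {R : comNzRingType} (f : option nat -> R) {n} (q : {set 'I_n})
  (st : qstate n) (ps : seq ('I_n * nat)) : R :=
  (\prod_(x | x \notin q) f ((foldl (qstep q) st ps).2 x))%R.
Definition wprod {R : comNzRingType} (f : option nat -> R) {n} (st : qstate n) : R :=
  (\prod_(x | x \notin st.1) f (st.2 x))%R.

Lemma wprod_fvd (R : comNzRingType) (f : option nat -> R) (f0 : f None = 1%R) n
  (O : {set 'I_n}) (j : 'I_n) s d fv :
  (\prod_(x | x \notin O) f (fvd j s d fv x))%R =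
  ((\prod_(x | x \notin O) f (fv x)) *
    f (Some s) ^+ #|[set x | (x \notin O) && ((x \notin vis fv) && visd j d x)]|)%R.
Proof.
rewrite (eq_bigr (fun x => f (fv x) * (if (x \notin vis fv) && visd j d x then f (Some s) else 1))%R); last first.
  move=> x _; rewrite ffunE inE; case: (fv x) => [a|] /=; first by rewrite mulr1.
  by case: visd; rewrite f0 ?mul1r ?mulr1.
rewrite big_split /=; congr (_ * _)%R.
rewrite -big_mkcondr -prodr_const; apply: eq_bigl => x; by rewrite inE.
Qed.

Fixpoint hrecf {R : comNzRingType} (L k : nat) (x : nat -> R) : R :=
  match L with
  | 0 => (k == 0)%:R
  | L'.+1 => (\sum_(g < k.+1) x 0 ^+ g * hrecf L' (k - g) (fun j => x j.+1))%R
  end.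

Lemma Ssum (R : comNzRingType) L K k (x : nat -> R) : k <= K ->
  (\sum_(e : {ffun 'I_L -> 'I_K.+1} | \sum_(j < L) (e j : nat) == k)
     \prod_(j < L) x j ^+ e j)%R = hrecf L k x.
Proof.
elim: L k x => [|L IH] k x hk /=.
  rewrite big_mkcond (big_pred1 [ffun i : 'I_0 => (ord0 : 'I_K.+1)]) => [|e]; last first.
    by rewrite /=; apply/esym/eqP/ffunP => -[].
  by rewrite /= !big_ord0; case: k {hk}.
pose h (p : 'I_K.+1 * {ffun 'I_L -> 'I_K.+1}) : {ffun 'I_L.+1 -> 'I_K.+1} :=
  [ffun j => if unlift ord0 j is Some j' then p.2 j' else p.1].
pose h' (e : {ffun 'I_L.+1 -> 'I_K.+1}) := (e ord0, [ffun j => e (lift ord0 j)]).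
have hK : cancel h h'.
  by move=> [g e]; rewrite /h /h' /= ffunE unlift_none; congr pair; apply/ffunP => j; rewrite !ffunE liftK.
have hK' : cancel h' h.
  move=> e; apply/ffunP => j; rewrite /h /h' ffunE /=.
  by case: unliftP => [j'|] ->; rewrite ?ffunE.
rewrite (reindex h); last by apply: onW_bij; exists h'.
have hs p : \sum_(j < L.+1) (h p j : nat) = p.1 + \sum_(j < L) (p.2 j : nat).
  by rewrite big_ord_recl /h ffunE unlift_none; congr addn; apply: eq_bigr => j _; rewrite ffunE liftK.
have hp p : (\prod_(j < L.+1) x j ^+ h p j = x 0 ^+ p.1 * \prod_(j < L) x j.+1 ^+ p.2 j)%R.
  by rewrite big_ord_recl /h ffunE unlift_none; congr (_ * _)%R; apply: eq_bigr => j _; rewrite ffunE liftK.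
rewrite (eq_bigl _ _ (fun p => congr1 (fun m => m == k) (hs p))) (eq_bigr _ (fun p _ => hp p)).
rewrite -(pair_big_dep xpredT (fun (g : 'I_K.+1) (e : {ffun 'I_L -> 'I_K.+1}) => (g + \sum_(j < L) (e j : nat) == k)) (fun g e => x 0 ^+ g * \prod_(j < L) x j.+1 ^+ e j)%R) /=.
rewrite (eq_bigr (fun i : 'I_K.+1 => if (i <= k)%N then x 0 ^+ i * hrecf L (k - i) (fun j => x j.+1) else 0)%R); last first.
  move=> i _; rewrite -big_distrr /=; case: leqP => ik.
    rewrite -IH; last by rewrite (leq_trans (leq_subr _ _)).
    congr (_ * _)%R; apply: eq_bigl => e.
    by rewrite -[RHS](eqn_add2l i) subnKC.
  rewrite big_pred0 ?mulr0 // => e; apply/negbTE; rewrite neq_ltn; apply/orP; right.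
  exact: (leq_trans ik (leq_addr _ _)).
rewrite -big_mkcond /= (big_ord_narrow_leq hk).
by [].
Qed.

Lemma hsymE (R : comNzRingType) k (xs : seq R) : hsym k xs = hrecf (size xs) k (fun j => nth 0%R xs j).
Proof. by rewrite /hsym Ssum. Qed.

Lemma hsym_nil (R : comNzRingType) k : hsym k ([::] : seq R) = ((k == 0)%:R)%R.
Proof. by rewrite hsymE. Qed.

Lemma hsym_cons (R : comNzRingType) k (x : R) xs :
  hsym k (x :: xs) = (\sum_(g < k.+1) x ^+ g * hsym (k - g) xs)%R.
Proof. by rewrite hsymE /=; apply: eq_bigr => g _; rewrite hsymE. Qed.

Lemma hsym0 (R : comNzRingType) (xs : seq R) : hsym 0 xs = 1%R.
Proof.
elim: xs => [|x xs IH]; first by rewrite hsym_nil.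
by rewrite hsym_cons big_ord1 /= IH mulr1.
Qed.

Lemma hsym1 (R : comNzRingType) k (x : R) : hsym k [:: x] = (x ^+ k)%R.
Proof.
rewrite hsym_cons big_ord_recr /= subnn hsym_nil /= mulr1 big1 ?add0r // => g _.
by rewrite hsym_nil subn_eq0 leqNgt ltn_ord mulr0.
Qed.

Fixpoint G {R : comNzRingType} (tt : nat -> R) (ps : seq nat) (r N : nat) : R :=
  match ps with
  | [::] => ((r == 0)%:R)%R
  | s :: ps' => match r with
                | 0 => (tt s ^+ N * G tt ps' 0 0)%R
                | r'.+1 => (\sum_(g < N) tt s ^+ g * G tt ps' r' (N - g.+1))%R
                end
  end.

Lemma G_low (R : comNzRingType) (tt : nat -> R) ps r N : N < r -> G tt ps r N = 0%R.
Proof.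
elim: ps r N => [|s ps IH] [|r] N //= hN.
rewrite big1 // => g _; rewrite IH ?mulr0 //.
have := ltn_ord g; lia.
Qed.

Lemma G00 (R : comNzRingType) (tt : nat -> R) ps : G tt ps 0 0 = 1%R.
Proof. by elim: ps => [|s ps IH] //=; rewrite IH expr0 mulr1. Qed.

Lemma G_hsym (R : comNzRingType) (tt : nat -> R) ps r N :
  r <= N -> r <= size ps -> (r < size ps) || (N == r) ->
  G tt ps r N = hsym (N - r) (map tt (take r.+1 ps)).
Proof.
elim: ps r N => [|s ps IH] r N.
  by case: r => //= _ _ /eqP ->; rewrite hsym_nil.
case: r => [|r] /= hN hr hc.
  by rewrite G00 mulr1 subn0 take0 hsym1.
rewrite hsym_cons.
have -> : (N - r.+1).+1 = N - r by rewrite subnSK.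
rewrite -(big_mkord xpredT (fun g => tt s ^+ g * G tt ps r (N - g.+1))%R).
rewrite (@big_cat_nat _ _ _ (N - r) 0 N) ?leq_subr //=.
rewrite [X in (_ + X)%R]big_nat_cond [X in (_ + X)%R]big1 ?addr0; last first.
  move=> g /andP [/andP [hg1 hg2] _]; rewrite G_low ?mulr0 //; lia.
rewrite big_mkord; apply: eq_bigr => g _.
rewrite IH.
- by have -> : N - g.+1 - r = N - r.+1 - g by lia.
- by have := ltn_ord g; lia.
- by [].
case/orP: hc => [h|/eqP hNr]; apply/orP; first by left.
right.
by move: (ltn_ord g) hNr; lia.
Qed.

Lemma Wt_cons (R : comNzRingType) (f : option nat -> R) n (q : {set 'I_n}) st p ps :
  Wt f q st (p :: ps) = Wt f q (qstep q st p) ps.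
Proof. by []. Qed.

Lemma claim (R : comNzRingType) (f : option nat -> R) (f0 : f None = 1%R) n
  (ps : seq ('I_n * nat)) :
  forall (occ : {set 'I_n}) (fv : {ffun 'I_n -> option nat}) r,
  occ \subset vis fv -> r <= size ps ->
  (\sum_(q | idx ((occ, fv) : qstate n) r q) Wt f q ((occ, fv) : qstate n) ps)%R =
  (wprod f ((occ, fv) : qstate n) * G (fun s => f (Some s)) (map snd ps) r #|~: vis fv|)%R.
Proof.
elim: ps => [|[j s] ps IH] occ fv r hocc hr.
  move: hr; rewrite leqn0 => /eqP ->.
  rewrite (big_pred1 occ) => [|q]; last by rewrite idx0.
  by rewrite /= mulr1.
have n0 : 0 < n by apply: (leq_ltn_trans _ (ltn_ord j)).
case: r hr => [|r] hr.
  rewrite (big_pred1 occ) => [|q]; last by rewrite idx0.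
  rewrite Wt_cons qstepE.
  have hd : dq occ occ j = n.
    by rewrite /dq hasNfind ?size_iota //; apply/hasPn => k _; rewrite andbN.
  rewrite hd ltnn.
  have hocc' : occ \subset vis (fvd j s n fv).
    by apply: (subset_trans hocc); apply/subsetP => x; rewrite visfvd => ->.
  have := IH occ (fvd j s n fv) 0 hocc' (leq0n _).
  rewrite (big_pred1 occ) => [|q]; last by rewrite idx0.
  rewrite /Wt => ->.
  have hall : vis (fvd j s n fv) = setT.
    apply/setP => x; rewrite in_setT visfvd; apply/orP; right.
    have [k hk <-] := site_surj _ j x; apply/visdP; exists (Ordinal hk) => //; exact: ltnW.
  rewrite hall setCT cards0 /wprod /= wprod_fvd // -mulrA; congr (_ * (_ ^+ _ * _))%R.
  apply: eq_card => x; rewrite !inE.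
  have hv : visd j n x.
    by have [k hk <-] := site_surj _ j x; apply/visdP; exists (Ordinal hk) => //; exact: ltnW.
  rewrite hv andbT; case: (boolP (x \in occ)) => xo //=.
  by move/subsetP: hocc => /(_ _ xo); rewrite inE => ->.
set V := vis fv; set N := #|~: V|; set c := f (Some s).
set tt := fun s0 : nat => f (Some s0).
have hocc1 := hocc; move/subsetP in hocc1.
rewrite (partition_big (fun q => insubd j (dq q occ j) : 'I_n) xpredT) //=.
rewrite (eq_bigr (fun k : 'I_n => if site j k \notin V then
   (wprod f ((site j k |: occ, fvd j s k fv) : qstate n) *
    G tt (map snd ps) r #|~: vis (fvd j s k fv)|)%R else 0%R)); last first.
  move=> k _.
  rewrite (eq_big (fun q => (site j k \notin V) && idx ((site j k |: occ, fvd j s k fv) : qstate n) r q)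
                  (fun q => Wt f q ((site j k |: occ, fvd j s k fv) : qstate n) ps)).
  - case: ifP => hk /=; last by rewrite big_pred0.
    apply: IH => //.
    apply/subsetP => x; rewrite in_setU1 visfvd => /orP [/eqP ->|/hocc1 ->//].
    by apply/orP; right; apply/visdP; exists k.
  - move=> q; rewrite -(idx_step _ _ _ _ _ s) //.
    case hq: (idx _ _ q) => //=.
    by rewrite -val_eqE val_insubd (@dq_lt n q occ fv j r hq).
  - move=> q /andP [hq]; rewrite -val_eqE val_insubd (@dq_lt n q occ fv j r hq) => /eqP hd.
    by rewrite Wt_cons qstepE hd ltn_ord.
rewrite -big_mkcond /=.
pose a (k : nat) := \sum_(0 <= l < k.+1) (site j l \notin V).
rewrite (eq_bigr (fun k : 'I_n => wprod f ((occ, fv) : qstate n) *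
   (c ^+ (a k).-1 * G tt (map snd ps) r (N - a k)))%R); last first.
  move=> k hk.
  set W := [set x | (x \notin V) && visd j k x].
  have hW : #|W| = a k by apply: card_visd.
  have x0W : site j k \in W by rewrite inE hk; apply/visdP; exists k.
  have x0o : site j k \notin occ by apply/negP => /hocc1; rewrite (negbTE hk).
  have fx0 : fv (site j k) = None by move: hk; rewrite inE negbK => /eqP.
  rewrite -hW mulrA; congr (_ * _)%R.
    rewrite /wprod /= wprod_fvd //; congr (_ * _ ^+ _)%R.
      rewrite [RHS](bigD1 (site j k)) //= fx0 f0 mul1r; apply: eq_bigl => x.
      by rewrite in_setU1 negb_or andbC.
    rewrite (cardsD1 (site j k) W) x0W add1n /=; apply: eq_card => x.
    rewrite [in LHS]inE in_setD1 [x \in W]inE in_setU1 negb_or -/V.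
    have := hocc1 x; case: (x \in occ); case: (x \in V); case: (x == site j k); by move=> // /(_ isT).
  have e1 : ~: vis (fvd j s k fv) = ~: V :\: W.
    apply/setP => x; rewrite in_setC visfvd in_setD in_setC [x \in W]inE.
    by case: (x \in V); case: visd.
  have e2 : ~: V :&: W = W.
    by apply/setIidPr/subsetP => x; rewrite inE => /andP [xV _]; rewrite in_setC.
  by rewrite e1 /N -(cardsID W (~: V)) e2 addKn.
rewrite -big_distrr /=; congr (_ * _)%R.
rewrite -(big_mkord (fun k => site j k \notin V) (fun k => c ^+ (a k).-1 * G tt (map snd ps) r (N - a k))%R).
have := count_sum _ (fun l => site j l \notin V) (fun m => c ^+ m.-1 * G tt (map snd ps) r (N - m))%R n.
rewrite /= => ->.
have hN : N = \sum_(0 <= l < n) (site j l \notin V).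
  have := card_visd _ j V n.-1; rewrite ltn_predL n0 prednK // => <- //.
  apply: eq_card => x.
  rewrite in_setC [in RHS]inE.
  have [k hk <-] := site_surj _ j x.
  have -> : visd j n.-1 (site j k) by apply/visdP; exists (Ordinal hk) => //=; rewrite -ltnS prednK.
  by rewrite andbT.
rewrite -hN big_mkord; apply: eq_bigr => g _ //.
Qed.

Definition fR {R : comNzRingType} (t : nat -> R) (i : nat) (o : option nat) : R :=
  if o is Some s then (if (1 <= s) && (s <= i) then t s else 1%R) else 1%R.

Lemma prod_swap (R : comNzRingType) (t : nat -> R) i n (fvF : 'I_n -> option nat) (q : {set 'I_n}) :
  (\prod_(1 <= s < i.+1) t s ^+ #|[set x | (x \notin q) && (fvF x == Some s)]|)%R =
  (\prod_(x | x \notin q) fR t i (fvF x))%R.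
Proof.
rewrite [RHS](eq_bigr (fun x => \prod_(1 <= s < i.+1) (if fvF x == Some s then t s else 1))%R); last first.
  move=> x _; case: (fvF x) => [a|] /=; last by rewrite big1.
  rewrite [RHS](eq_bigr (fun s => if s == a then t s else 1%R)); last by move=> s _; rewrite eq_sym.
  by rewrite -big_mkcond big_nat1_eq ltnS.
rewrite exchange_big /=; apply: eq_bigr => s _.
rewrite -big_mkcondr -prodr_const; apply: eq_bigl => x; by rewrite inE.
Qed.

Lemma count_enum_card n (P : pred 'I_n) : count P (enum 'I_n) = #|P|.
Proof. by rewrite -sum1_count big_enum_cond /= -sum1_card; apply: eq_bigl. Qed.

Lemma map_cst (T U : Type) (a : U) (s : seq T) : map (fun _ => a) s = nseq (size s) a.
Proof. by elim: s => //= x s ->. Qed.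

Lemma sum_bool_card (T : finType) (b : pred T) : \sum_(x : T) (b x : nat) = #|b|.
Proof.
rewrite -sum1_card [RHS]big_mkcond; apply: eq_bigr => x _.
by rewrite unfold_in; case: (b x).
Qed.

Lemma mapsnd_E n i (u : 'I_n -> option nat) :
  map snd (entry_order i u) =
  flatten [seq nseq (count (fun x => psize i u x == s) (enum 'I_n)) s | s <- iota 1 i].
Proof.
rewrite /entry_order map_flatten -map_comp; congr flatten; apply: eq_map => s /=.
by rewrite -map_comp map_cst size_filter.
Qed.

Theorem lemma7p1 (R : comNzRingType) (t : nat -> R) (n i : nat) (m : nat -> nat)
  (u : 'I_n -> option nat) :
  0 < n -> 1 <= i -> has_type i m u -> 0 < m i ->
  let c := \sum_(1 <= j < i.+1) m j in
  c <= n ->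
  (\sum_(q : {set 'I_n} | #|q| == c) qweight t i u q =
   hsym (n - c)
     (flatten [seq nseq (m j + (j == i)) (t j) | j <- iota 1 i]))%R.
Proof.
move=> n0; case: i => // i _ [_ [hcnt hu]] hmi c hc.
set E := entry_order i.+1 u.
set fv0 : {ffun 'I_n -> option nat} := [ffun => None].
have hvis0 : vis fv0 = set0 by apply/setP => x; rewrite !inE ffunE.
pose cnt s := count (fun x => psize i.+1 u x == s) (enum 'I_n).
have hcs s : 1 <= s < i.+1 -> cnt s = m s.
  move=> hs; rewrite /cnt count_enum_card -hcnt //; apply: eq_card => x.
  rewrite inE unfold_in /= /psize; case hx: (u x) => [a|] //=.
  by case/andP: hs => _ /ltn_eqF; rewrite eq_sym => ->.
set M := #|[pred x | u x == None]|.
have hci : cnt i.+1 = M.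
  rewrite /cnt count_enum_card; apply: eq_card => x; rewrite !unfold_in /= /psize.
  case hx: (u x) => [a|] /=; last by rewrite eqxx.
  by have := hu x; rewrite hx /= => /andP [_ ha]; rewrite (ltn_eqF ha).
set K := \sum_(1 <= s < i.+1) m s.
have hpart : n = K + M.
  have h1 x : ((u x == None) + \sum_(1 <= s < i.+1) (u x == Some s) = 1)%N.
    case hx: (u x) => [a|] /=; last by rewrite big1.
    have := hu x; rewrite hx /= => ha.
    rewrite add0n (eq_bigr (fun s => if s == a then 1 else 0)%N); last first.
      move=> s _; have -> : (Some a == Some s) = (s == a) by apply/eqP/eqP => [[->]|->].
      by case: (s == a).
    by rewrite -big_mkcond big_nat1_eq ha.
  rewrite -[LHS]card_ord -sum1_card (eq_bigr _ (fun x _ => esym (h1 x))) big_split /=.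
  rewrite exchange_big /= addnC sum_bool_card; congr (_ + _)%N.
  apply: eq_big_nat => s hs; rewrite sum_bool_card -hcnt //; apply: eq_card => x.
  by rewrite inE.
have hiota : iota 1 i.+1 = iota 1 i ++ [:: i.+1] by rewrite -[in LHS](addn1 i) iotaD add1n.
set A := flatten [seq nseq (cnt s) s | s <- iota 1 i].
have hA : size A = K.
  rewrite /A size_flatten /shape -map_comp sumnE big_map.
  rewrite /K /index_iota subn1 /=; apply: eq_big_seq => s; rewrite mem_iota => hs.
  by rewrite /= size_nseq hcs.
have hE : map snd E = A ++ nseq M i.+1.
  by rewrite /E mapsnd_E hiota map_cat flatten_cat /= cats0 -hci.
have hcK : c = K + m i.+1 by rewrite /c big_nat_recr.
have hsE : size (map snd E) = n by rewrite hE size_cat hA size_nseq -hpart.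
rewrite (eq_big (fun q => idx ((set0, fv0) : qstate n) c q) (fun q => Wt (fR t i.+1) q ((set0, fv0) : qstate n) E)); last first.
- by move=> q _; rewrite /qweight /alpha prod_swap.
- by move=> q; rewrite /idx /= hvis0 setI0 eqxx setD0.
rewrite claim ?sub0set //; last by rewrite -(size_map snd) hsE.
rewrite /wprod big1 ?mul1r; last by move=> x _; rewrite /= ffunE.
rewrite hvis0 setC0 cardsT card_ord G_hsym //; last 2 first.
- by rewrite hsE.
- by rewrite hsE; case: ltngtP hc.
have [hnc|hnc] := eqVneq n c.
  have -> : n - c = 0 by rewrite hnc subnn.
  by rewrite !hsym0.

have hcn : c < n by rewrite ltn_neqAle eq_sym hnc hc.
congr hsym; rewrite hE take_cat hA.
have -> : (c.+1 < K) = false by apply/negbTE; rewrite hcK; lia.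
have -> : c.+1 - K = (m i.+1).+1 by rewrite hcK; lia.
rewrite take_nseq; last by move: hcn; rewrite hcK hpart; lia.
rewrite map_cat hiota map_cat flatten_cat /= cats0 eqxx addn1 map_nseq /fR /= leqnn.
congr (_ ++ _); rewrite /A map_flatten -map_comp; congr flatten.
apply/eq_in_map => s; rewrite mem_iota => hs /=.
rewrite map_nseq hcs; last by move: hs; lia.
have -> : (s == i.+1) = false by apply/negbTE; move: hs; lia.
by rewrite addn0; case/andP: hs => -> hs; rewrite /= ifT //; lia.
Qed.
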